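(* Fix an integer $k\ge2$ and let $w,\sigma=w^{-1},\widetilde w$ be as in the context. Let $l\in\{0,\dots,n\}$ and let $I$ be an interval carrying $w_{n-l}$. Then for every $m\in\{0,\dots,k-2\}$, $$\int_{I_m}(\widetilde w)^2\sigma\le 30\,p^2\,w(I_m).$$
   Context: All intervals are half-open, $[a,b)$; $w(E)=\int_E w$. Fix an integer $k\ge2$, $\varepsilon=3^{-k}$, $p=\frac{1}{3\varepsilon}\Big(\frac{1+\varepsilon}{2}+\frac{4\varepsilon^2}{1+\varepsilon}\Big)$, $u=\sqrt p+\sqrt{p-1}$. For an interval $I$: $I_\pm$ its left/right halves; $I_m$ ($0\le m\le k-1$) the interval with the same right endpoint as $I$ and length $3^{-m}|I|$; $J^{(i)}$ ($i=1,2,3$) the $i$-th from the left of the three equal thirds of $J$. For $\omega\sigma=p$: $w_0(\omega,\sigma,I)=\frac{\omega}{\sqrt p}(u\chi_{I_-}+u^{-1}\chi_{I_+})$ and, for $\nu\ge1$, $w_\nu(\omega,\sigma,I)=\frac{\omega}{p}\big(\sum_{m=0}^{k-2}\chi_{I_m^{(1)}}+\chi_{I_{k-1}^{(1)}\cup I_{k-1}^{(2)}}+\frac{4\varepsilon}{1+\varepsilon}\chi_{I_{k-1}^{(3)}}\big)+\sum_{m=0}^{k-2}w_{\nu-1}(2\omega,\frac\sigma2,I_m^{(2)})$. Let $n=3^{k-1}$, let $w$ be the $1$-periodic extension of $w_n(1,p,[0,1))$ to $\mathbb R$, and $\sigma=w^{-1}$. Carrying: each $[j,j+1)$, $j\in\mathbb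 Z$, carries $w_n$; if $I$ carries $w_\nu$ with $\nu\ge1$, then each $I_m^{(2)}$, $0\le m\le k-2$, carries $w_{\nu-1}$. $\operatorname{supp}w_\nu$ is the union of all intervals carrying $w_\nu$. $\widetilde w=\sum_{l=1}^n2^l\chi_{\operatorname{supp}w_{n-(l-1)}\setminus\operatorname{supp}w_{n-l}}+2^{n+1}\chi_{\operatorname{supp}w_0}$. *)

(* Defs.v *)
From Stdlib Require Import Reals ZArith ClassicalEpsilon.
Open Scope R_scope.

(* A half-open interval [lo, hi). *)
Record intv := mkI { lo : R; hi : R }.

Definition inI (I : intv) (x : R) : bool :=
  if Rle_dec (lo I) x then (if Rlt_dec x (hi I) then true else false) else false.

Definition chi (I : intv) (x : R) : R := if inI I x then 1 else 0.
Definition chi2 (I J : intv) (x : R) : R := if orb (inI I x) (inI J x) then 1 else 0.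

Definition chiS (S : R -> Prop) (x : R) : R :=
  if excluded_middle_informative (S x) then 1 else 0.

Definition len (I : intv) : R := hi I - lo I.
Definition Iminus (I : intv) : intv := mkI (lo I) ((lo I + hi I) / 2).
Definition Iplus (I : intv) : intv := mkI ((lo I + hi I) / 2) (hi I).
Definition Isub (I : intv) (m : nat) : intv := mkI (hi I - len I / 3 ^ m) (hi I).
Definition third (J : intv) (i : nat) : intv :=
  mkI (lo J + INR (i - 1) * len J / 3) (lo J + INR i * len J / 3).

Fixpoint sumlt (N : nat) (f : nat -> R) : R :=
  match N with O => 0 | S N' => sumlt N' f + f N' end.

Definition eps (k : nat) : R := / 3 ^ k.
Definition pp (k : nat) : R :=
  / (3 * eps k) * ((1 + eps k) / 2 + 4 * eps k ^ 2 / (1 + eps k)).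
Definition uu (k : nat) : R := sqrt (pp k) + sqrt (pp k - 1).

Fixpoint wnu (k : nat) (nu : nat) (omega sigma : R) (I : intv) (x : R) : R :=
  match nu with
  | O => omega / sqrt (pp k) * (uu k * chi (Iminus I) x + / uu k * chi (Iplus I) x)
  | S nu' =>
      omega / pp k *
        (sumlt (k - 1) (fun m => chi (third (Isub I m) 1) x)
         + chi2 (third (Isub I (k - 1)) 1) (third (Isub I (k - 1)) 2) x
         + 4 * eps k / (1 + eps k) * chi (third (Isub I (k - 1)) 3) x)
      + sumlt (k - 1) (fun m => wnu k nu' (2 * omega) (sigma / 2) (third (Isub I m) 2) x)
  end.

Definition nn (k : nat) : nat := 3 ^ (k - 1).

Definition ww (k : nat) (x : R) : R := wnu k (nn k) 1 (pp k) (mkI 0 1) (frac_part x).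
Definition sig (k : nat) (x : R) : R := / ww k x.

Inductive carries (k : nat) : nat -> intv -> Prop :=
  | carries_unit : forall j : Z, carries k (nn k) (mkI (IZR j) (IZR j + 1))
  | carries_child : forall nu I m, carries k (S nu) I -> (m <= k - 2)%nat ->
      carries k nu (third (Isub I m) 2).

Definition supp (k nu : nat) (x : R) : Prop :=
  exists I, carries k nu I /\ inI I x = true.

Definition wt (k : nat) (x : R) : R :=
  sumlt (nn k) (fun i => let l := S i in
     2 ^ l * chiS (fun y => supp k (nn k - (l - 1)) y /\ ~ supp k (nn k - l) y) x)
  + 2 ^ (S (nn k)) * chiS (supp k 0) x.

(* Main.v *)
Require Import Defs.
From Stdlib Require Import Reals ZArith ClassicalEpsilon Lra Lia.
From Coquelicot Require Import Coquelicot.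
Open Scope R_scope.


Lemma inI_iff I x : inI I x = true <-> lo I <= x < hi I.
Proof.
  unfold inI; destruct (Rle_dec (lo I) x); destruct (Rlt_dec x (hi I));
  split; intros; try lra; try discriminate; auto.
Qed.

Lemma inI_false I x : ~ (lo I <= x < hi I) -> inI I x = false.
Proof.
  intros H; destruct (inI I x) eqn:E; auto. apply inI_iff in E; tauto.
Qed.

Lemma chi_1 I x : lo I <= x < hi I -> chi I x = 1.
Proof. intros H; unfold chi; apply inI_iff in H; now rewrite H. Qed.

Lemma chi_0 I x : ~ (lo I <= x < hi I) -> chi I x = 0.
Proof. intros H; unfold chi; now rewrite inI_false. Qed.

Lemma chi2_1 I J x : lo I <= x < hi I \/ lo J <= x < hi J -> chi2 I J x = 1.
Proof.
  intros [H|H]; unfold chi2; apply inI_iff in H; rewrite H; auto.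
  now rewrite Bool.orb_true_r.
Qed.

Lemma chi2_0 I J x : ~ (lo I <= x < hi I) -> ~ (lo J <= x < hi J) -> chi2 I J x = 0.
Proof. intros H1 H2; unfold chi2; now rewrite !inI_false. Qed.

Lemma sumlt_ext N f g : (forall i, (i < N)%nat -> f i = g i) -> sumlt N f = sumlt N g.
Proof.
  induction N; simpl; intros H; auto.
  rewrite IHN by (intros; apply H; lia). now rewrite H by lia.
Qed.

Lemma sumlt_zero N f : (forall i, (i < N)%nat -> f i = 0) -> sumlt N f = 0.
Proof.
  induction N; simpl; intros H; auto.
  rewrite IHN by (intros; apply H; lia). rewrite H by lia. ring.
Qed.

Lemma sumlt_one N f i0 : (i0 < N)%nat -> (forall i, (i < N)%nat -> i <> i0 -> f i = 0) ->
  sumlt N f = f i0.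
Proof.
  induction N; simpl; intros H0 H; [lia|].
  destruct (Nat.eq_dec i0 N) as [->|Hne].
  - rewrite sumlt_zero. ring. intros; apply H; lia.
  - rewrite IHN by (try lia; intros; apply H; lia). rewrite (H N) by lia. ring.
Qed.

Definition Pt (J : intv) (m : nat) : R := hi J - len J / 3 ^ m.
Definition Dt (J : intv) (m : nat) : R := len J / 3 ^ (S m).

Lemma pow3_pos m : 0 < 3 ^ m.
Proof. apply pow_lt; lra. Qed.

Ltac p3 := repeat match goal with |- context [3 ^ ?m] =>
  let H := fresh in assert (H := pow3_pos m); revert H; generalize (3 ^ m) end; intros.

Lemma t1_lo J m : lo (third (Isub J m) 1) = Pt J m.
Proof. unfold third, Isub, Pt; simpl; field. apply pow_nonzero; lra. Qed.
Lemma t1_hi J m : hi (third (Isub J m) 1) = Pt J m + Dt J m.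
Proof. unfold third, Isub, Pt, Dt, len; simpl. field. apply pow_nonzero; lra. Qed.
Lemma t2_lo J m : lo (third (Isub J m) 2) = Pt J m + Dt J m.
Proof. unfold third, Isub, Pt, Dt, len; simpl. field. apply pow_nonzero; lra. Qed.
Lemma t2_hi J m : hi (third (Isub J m) 2) = Pt J (S m).
Proof. unfold third, Isub, Pt, Dt, len; simpl. field. apply pow_nonzero; lra. Qed.
Lemma t3_lo J m : lo (third (Isub J m) 3) = Pt J (S m).
Proof. unfold third, Isub, Pt, Dt, len; simpl. field. apply pow_nonzero; lra. Qed.
Lemma t3_hi J m : hi (third (Isub J m) 3) = hi J.
Proof. unfold third, Isub, Pt, Dt, len; simpl. field. apply pow_nonzero; lra. Qed.
Lemma len_t2 J m : len (third (Isub J m) 2) = Dt J m.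
Proof. unfold third, Isub, Pt, Dt, len; simpl. field. apply pow_nonzero; lra. Qed.
Lemma Pt_S J m : Pt J (S m) = Pt J m + 2 * Dt J m.
Proof. unfold Pt, Dt; simpl. field. apply pow_nonzero; lra. Qed.
Lemma Pt_0 J : Pt J 0 = lo J.
Proof. unfold Pt, len; simpl; field. Qed.
Lemma Dt_pos J m : len J > 0 -> Dt J m > 0.
Proof. intros; unfold Dt. apply Rdiv_lt_0_compat; auto. apply pow3_pos. Qed.
Lemma Pt_lt_hi J m : len J > 0 -> Pt J m < hi J.
Proof. intros; unfold Pt. assert (0 < len J / 3 ^ m) by (apply Rdiv_lt_0_compat; auto; apply pow3_pos). lra. Qed.
Lemma Pt_mono J m m' : len J > 0 -> (m <= m')%nat -> Pt J m <= Pt J m'.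
Proof.
  intros HL Hm; induction Hm; [lra|]. rewrite Pt_S. pose proof (Dt_pos J m0 HL). lra.
Qed.
Lemma Pt_ge_lo J m : len J > 0 -> lo J <= Pt J m.
Proof. intros; rewrite <- Pt_0; apply Pt_mono; auto; lia. Qed.


Definition mem (J : intv) (x : R) : Prop := lo J <= x < hi J.

Lemma piece12 J m i x : len J > 0 -> (i = 1 \/ i = 2)%nat -> mem (third (Isub J m) i) x ->
  Pt J m <= x < Pt J (S m).
Proof.
  unfold mem; intros HL [->| ->]; pose proof (Dt_pos J m HL).
  - rewrite t1_lo, t1_hi, Pt_S. intros. lra.
  - rewrite t2_lo, t2_hi, Pt_S. intros. lra.
Qed.

Lemma piece_sub J m i x : len J > 0 -> (i = 1 \/ i = 2 \/ i = 3)%nat ->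
  mem (third (Isub J m) i) x -> mem J x.
Proof.
  intros HL Hi Hx. pose proof (Pt_ge_lo J m HL). pose proof (Pt_lt_hi J (S m) HL).
  destruct Hi as [->|[->| ->]].
  - apply piece12 in Hx; auto. unfold mem; lra.
  - apply piece12 in Hx; auto. unfold mem; lra.
  - unfold mem in *. rewrite t3_lo, t3_hi in Hx. pose proof (Pt_mono J m (S m) HL ltac:(lia)). lra.
Qed.

Lemma pos_other J m m' i x : len J > 0 -> (i = 1 \/ i = 2)%nat -> m' <> m ->
  Pt J m <= x < Pt J (S m) -> ~ mem (third (Isub J m') i) x.
Proof.
  intros HL Hi Hne Hx Hm. apply piece12 in Hm; auto.
  destruct (Nat.lt_ge_cases m' m).
  - pose proof (Pt_mono J (S m') m HL ltac:(lia)). lra.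
  - pose proof (Pt_mono J (S m) m' HL ltac:(lia)). lra.
Qed.

Lemma pos_high J m m' i x : len J > 0 -> (i = 1 \/ i = 2)%nat -> (S m' <= m)%nat ->
  Pt J m <= x -> ~ mem (third (Isub J m') i) x.
Proof.
  intros HL Hi Hle Hx Hm. apply piece12 in Hm; auto.
  pose proof (Pt_mono J (S m') m HL Hle). lra.
Qed.

Lemma pos_low J m i x : len J > 0 -> (i = 1 \/ i = 2 \/ i = 3)%nat ->
  x < Pt J m -> ~ mem (third (Isub J m) i) x.
Proof.
  intros HL Hi Hx Hm. unfold mem in Hm. pose proof (Dt_pos J m HL).
  destruct Hi as [->|[->| ->]].
  - rewrite t1_lo in Hm; lra.
  - rewrite t2_lo in Hm; lra.
  - rewrite t3_lo, Pt_S in Hm; lra.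
Qed.

Lemma len_Iminus I : len (Iminus I) = len I / 2.
Proof. unfold len, Iminus; simpl; field. Qed.

Lemma wnu_out k nu om sg I x : len I > 0 -> ~ mem I x -> wnu k nu om sg I x = 0.
Proof.
  revert om sg I. induction nu; intros om sg I HL Hx; cbn [wnu].
  - rewrite !chi_0. ring.
    + unfold mem, Iplus, len in *; simpl in *. lra.
    + unfold mem, Iminus, len in *; simpl in *. lra.
  - rewrite sumlt_zero, chi2_0, chi_0, sumlt_zero. ring.
    + intros i _. apply IHnu. rewrite len_t2; apply Dt_pos; auto.
      intro H; apply Hx; apply (piece_sub I i 2 x); auto.
    + intro H; apply Hx; apply (piece_sub I (k-1) 3 x); auto.
    + intro H; apply Hx; apply (piece_sub I (k-1) 1 x); auto.
    + intro H; apply Hx; apply (piece_sub I (k-1) 2 x); auto.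
    + intros i _. apply chi_0. intro H; apply Hx; apply (piece_sub I i 1 x); auto.
Qed.


Section Ev.
Variables (k : nat) (hk : (2 <= k)%nat) (nu : nat) (om sg : R) (J : intv) (HL : len J > 0).

Let asum x := sumlt (k - 1) (fun m0 => chi (third (Isub J m0) 1) x).

Lemma wnu_S_eq x : wnu k (S nu) om sg J x =
  om / pp k * (sumlt (k - 1) (fun m0 => chi (third (Isub J m0) 1) x)
         + chi2 (third (Isub J (k - 1)) 1) (third (Isub J (k - 1)) 2) x
         + 4 * eps k / (1 + eps k) * chi (third (Isub J (k - 1)) 3) x)
      + sumlt (k - 1) (fun m0 => wnu k nu (2 * om) (sg / 2) (third (Isub J m0) 2) x).
Proof. reflexivity. Qed.

Lemma low_pieces x m : (m <= k - 2)%nat -> x < Pt J (S m) ->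
  chi2 (third (Isub J (k - 1)) 1) (third (Isub J (k - 1)) 2) x = 0 /\
  chi (third (Isub J (k - 1)) 3) x = 0.
Proof.
  intros Hm Hx. assert (Hx' : x < Pt J (k-1)).
  { pose proof (Pt_mono J (S m) (k-1) HL ltac:(lia)). lra. }
  split.
  - apply chi2_0; apply (pos_low J (k-1)); auto.
  - apply chi_0; apply (pos_low J (k-1)); auto.
Qed.

Lemma ev_a x m : (m <= k - 2)%nat -> mem (third (Isub J m) 1) x ->
  wnu k (S nu) om sg J x = om / pp k.
Proof.
  intros Hm Hx. assert (Hp := piece12 J m 1 x HL ltac:(auto) Hx).
  rewrite wnu_S_eq.
  rewrite (sumlt_one (k-1) (fun m0 => chi (third (Isub J m0) 1) x) m) by
    (try lia; intros i Hi Hne; apply chi_0; apply (pos_other J m i 1 x); auto).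
  rewrite (chi_1 _ _ Hx).
  destruct (low_pieces x m Hm) as [-> ->]; [lra|].
  rewrite sumlt_zero. ring.
  intros i Hi. apply wnu_out. rewrite len_t2; apply Dt_pos; auto.
  destruct (Nat.eq_dec i m) as [->|Hne].
  - unfold mem in *. rewrite t2_lo. rewrite t1_hi in Hx. lra.
  - apply (pos_other J m i 2 x); auto.
Qed.

Lemma ev_c x m : (m <= k - 2)%nat -> mem (third (Isub J m) 2) x ->
  wnu k (S nu) om sg J x = wnu k nu (2 * om) (sg / 2) (third (Isub J m) 2) x.
Proof.
  intros Hm Hx. assert (Hp := piece12 J m 2 x HL ltac:(auto) Hx).
  rewrite wnu_S_eq.
  rewrite (sumlt_zero (k-1) (fun m0 => chi (third (Isub J m0) 1) x)).
  2:{ intros i Hi. apply chi_0. destruct (Nat.eq_dec i m) as [->|Hne].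
      - unfold mem in *. rewrite t1_hi. rewrite t2_lo in Hx. lra.
      - apply (pos_other J m i 1 x); auto. }
  destruct (low_pieces x m Hm) as [-> ->]; [lra|].
  rewrite (sumlt_one (k-1) _ m). ring. lia.
  intros i Hi Hne. apply wnu_out. rewrite len_t2; apply Dt_pos; auto.
  apply (pos_other J m i 2 x); auto.
Qed.

Lemma high_pieces x : Pt J (k - 1) <= x ->
  sumlt (k - 1) (fun m0 => chi (third (Isub J m0) 1) x) = 0 /\
  sumlt (k - 1) (fun m0 => wnu k nu (2 * om) (sg / 2) (third (Isub J m0) 2) x) = 0.
Proof.
  intros Hx; split; apply sumlt_zero; intros i Hi.
  - apply chi_0. apply (pos_high J (k-1) i 1 x); auto; lia.
  - apply wnu_out. rewrite len_t2; apply Dt_pos; auto.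
    apply (pos_high J (k-1) i 2 x); auto; lia.
Qed.

Lemma ev_b x : mem (third (Isub J (k-1)) 1) x \/ mem (third (Isub J (k-1)) 2) x ->
  wnu k (S nu) om sg J x = om / pp k.
Proof.
  intros Hx. 
  assert (Hp : Pt J (k-1) <= x < Pt J (S (k - 1))).
  { destruct Hx as [Hx|Hx]; [apply (piece12 J (k-1) 1 x) | apply (piece12 J (k-1) 2 x)]; auto. }
  rewrite wnu_S_eq. destruct (high_pieces x) as [-> ->]; [lra|].
  rewrite chi2_1 by exact Hx.
  rewrite chi_0. ring.
  unfold mem. rewrite t3_lo. lra.
Qed.

Lemma ev_cp x : mem (third (Isub J (k-1)) 3) x ->
  wnu k (S nu) om sg J x = om / pp k * (4 * eps k / (1 + eps k)).
Proof.
  intros Hx.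
  assert (Hp : Pt J (k-1) <= x).
  { unfold mem in Hx. rewrite t3_lo in Hx. pose proof (Pt_mono J (k-1) (S (k-1)) HL ltac:(lia)). lra. }
  rewrite wnu_S_eq. destruct (high_pieces x) as [-> ->]; [lra|].
  rewrite chi_1 by exact Hx.
  rewrite chi2_0. ring.
  - intro H. apply (piece12 J (k-1) 1 x) in H; auto. unfold mem in Hx. rewrite t3_lo in Hx. lra.
  - intro H. apply (piece12 J (k-1) 2 x) in H; auto. unfold mem in Hx. rewrite t3_lo in Hx. lra.
Qed.

End Ev.


Lemma carries_le k nu I : carries k nu I -> (nu <= nn k)%nat.
Proof. induction 1; lia. Qed.

Lemma carries_len k nu I : carries k nu I -> len I > 0.
Proof.
  induction 1.
  - unfold len; simpl; lra.
  - rewrite len_t2; apply Dt_pos; auto.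
Qed.

Lemma carries_cases k nu I : carries k nu I ->
  (nu = nn k /\ exists j, I = mkI (IZR j) (IZR j + 1)) \/
  (exists P m, carries k (S nu) P /\ (m <= k - 2)%nat /\ I = third (Isub P m) 2).
Proof. intros H; destruct H; [left|right]; eauto 6. Qed.

Lemma unit_uniq (j1 j2 : Z) x : IZR j1 <= x < IZR j1 + 1 -> IZR j2 <= x < IZR j2 + 1 -> j1 = j2.
Proof.
  intros H1 H2.
  assert (A : (j1 < j2 + 1)%Z) by (apply lt_IZR; rewrite plus_IZR; simpl; lra).
  assert (B : (j2 < j1 + 1)%Z) by (apply lt_IZR; rewrite plus_IZR; simpl; lra).
  lia.
Qed.

Lemma child_uniq P m1 m2 x : len P > 0 -> mem (third (Isub P m1) 2) x ->
  mem (third (Isub P m2) 2) x -> m1 = m2.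
Proof.
  intros HL H1 H2. destruct (Nat.eq_dec m2 m1) as [|Hne]; auto.
  exfalso. apply (pos_other P m1 m2 2 x HL ltac:(auto) Hne); auto.
  apply (piece12 P m1 2 x); auto.
Qed.

Lemma carries_uniq k d : forall nu I1 I2 x, (nn k - nu = d)%nat ->
  carries k nu I1 -> carries k nu I2 -> mem I1 x -> mem I2 x -> I1 = I2.
Proof.
  induction d; intros nu I1 I2 x Hd H1 H2 M1 M2.
  - pose proof (carries_le _ _ _ H1).
    destruct (carries_cases _ _ _ H1) as [[_ [j1 ->]]|[P [m [HP _]]]];
      [|apply carries_le in HP; lia].
    destruct (carries_cases _ _ _ H2) as [[_ [j2 ->]]|[P [m [HP _]]]];
      [|apply carries_le in HP; lia].
    unfold mem in *; simpl in *. now rewrite (unit_uniq j1 j2 x).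
  - destruct (carries_cases _ _ _ H1) as [[E _]|[P1 [m1 [HP1 [Hm1 ->]]]]]; [lia|].
    destruct (carries_cases _ _ _ H2) as [[E _]|[P2 [m2 [HP2 [Hm2 ->]]]]]; [lia|].
    assert (L1 := carries_len _ _ _ HP1). assert (L2 := carries_len _ _ _ HP2).
    assert (P1 = P2).
    { apply (IHd (S nu) P1 P2 x); auto. lia.
      apply (piece_sub P1 m1 2 x); auto. apply (piece_sub P2 m2 2 x); auto. }
    subst P2. now rewrite (child_uniq P1 m1 m2 x).
Qed.

Lemma supp_mono k a I x : carries k a I -> mem I x ->
  forall b, (a <= b <= nn k)%nat -> supp k b x.
Proof.
  intros H; induction H; intros Hx b Hb.
  - assert (b = nn k) by lia. subst. exists (mkI (IZR j) (IZR j + 1)).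
    split; [constructor|]. now apply inI_iff.
  - destruct (Nat.eq_dec b nu) as [->|Hne].
    + exists (third (Isub I m) 2). split; [now constructor|]. now apply inI_iff.
    + apply IHcarries; [|lia]. apply (piece_sub I m 2 x); auto.
      eapply carries_len; eauto.
Qed.

Definition shift (I : intv) (t : R) : intv := mkI (lo I + t) (hi I + t).

Lemma inI_shift I t y : inI (shift I t) (y + t) = inI I y.
Proof.
  unfold inI, shift; simpl.
  destruct (Rle_dec (lo I + t) (y + t)); destruct (Rle_dec (lo I) y); try lra; auto.
  destruct (Rlt_dec (y + t) (hi I + t)); destruct (Rlt_dec y (hi I)); try lra; auto.
Qed.

Lemma Iminus_shift I t : Iminus (shift I t) = shift (Iminus I) t.
Proof. unfold Iminus, shift; simpl; f_equal; field. Qed.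
Lemma Iplus_shift I t : Iplus (shift I t) = shift (Iplus I) t.
Proof. unfold Iplus, shift; simpl; f_equal; field. Qed.
Lemma third_shift I t m i : third (Isub (shift I t) m) i = shift (third (Isub I m) i) t.
Proof.
  unfold third, Isub, shift, len; simpl; f_equal; field; apply pow_nonzero; lra.
Qed.

Lemma wnu_shift k nu : forall om sg I t y,
  wnu k nu om sg (shift I t) (y + t) = wnu k nu om sg I y.
Proof.
  induction nu; intros om sg I t y; cbn [wnu]; unfold chi, chi2.
  - now rewrite Iminus_shift, Iplus_shift, !inI_shift.
  - rewrite !third_shift, !inI_shift. f_equal.
    + f_equal. f_equal. f_equal. apply sumlt_ext; intros.
      now rewrite third_shift, inI_shift.
    + apply sumlt_ext; intros. rewrite third_shift. apply IHnu.
Qed.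

Lemma ww_eval k (hk : (2 <= k)%nat) nu J x : carries k nu J -> mem J x ->
  exists s, ww k x = wnu k nu (2 ^ (nn k - nu)) s J x.
Proof.
  intros H; revert x; induction H; intros x Hx.
  - exists (pp k). rewrite Nat.sub_diag; simpl.
    unfold mem in Hx; simpl in Hx.
    destruct (Int_part_frac_part_spec x j (x - IZR j)) as [_ Hf]; [lra|ring|].
    unfold ww. rewrite <- Hf.
    replace (mkI (IZR j) (IZR j + 1)) with (shift (mkI 0 1) (IZR j))
      by (unfold shift; simpl; f_equal; ring).
    replace x with ((x - IZR j) + IZR j) at 2 by ring.
    now rewrite wnu_shift.
  - assert (HL := carries_len _ _ _ H).
    destruct (IHcarries x) as [s Hs]. apply (piece_sub I m 2 x); auto.
    exists (s / 2). rewrite Hs. rewrite (ev_c k hk nu _ s I HL x m); auto.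
    f_equal. apply carries_le in H.
    replace (nn k - nu)%nat with (S (nn k - S nu)) by lia. simpl; ring.
Qed.


Lemma chiS_1 (S : R -> Prop) x : S x -> chiS S x = 1.
Proof. unfold chiS; destruct excluded_middle_informative; tauto. Qed.
Lemma chiS_0 (S : R -> Prop) x : ~ S x -> chiS S x = 0.
Proof. unfold chiS; destruct excluded_middle_informative; tauto. Qed.

Lemma supp_mono' k a b x : supp k a x -> (a <= b <= nn k)%nat -> supp k b x.
Proof.
  intros [I [H Hx]] Hab. apply inI_iff in Hx. eapply supp_mono; eauto.
Qed.

Lemma wt_val k d x : (d <= nn k)%nat -> supp k (nn k - d) x ->
  ((d < nn k)%nat -> ~ supp k (nn k - d - 1) x) -> wt k x = 2 ^ (S d).
Proof.
  intros Hd Hs Hn. unfold wt.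
  destruct (Nat.eq_dec d (nn k)) as [->|Hne].
  - rewrite sumlt_zero. rewrite chiS_1. ring.
    + rewrite Nat.sub_diag in Hs; auto.
    + intros i Hi. rewrite chiS_0. ring. intros [_ H]. apply H.
      apply (supp_mono' k (nn k - nn k)); auto. lia.
  - rewrite (sumlt_one _ _ d).
    2: lia.
    2:{ intros i Hi Hne2. rewrite chiS_0. ring.
      intros [H1 H2].
      destruct (Nat.lt_ge_cases i d).
      - apply H2; apply (supp_mono' k (nn k - d)); auto; lia.
      - apply (Hn ltac:(lia)); apply (supp_mono' k (nn k - (S i - 1))); auto; lia. }
    rewrite chiS_1. rewrite (chiS_0 (supp k 0)). ring.
    + intro H. apply (Hn ltac:(lia)). apply (supp_mono' k 0); auto; lia.
    + replace (S d - 1)%nat with d by lia. split; auto.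
      replace (nn k - S d)%nat with (nn k - d - 1)%nat by lia. apply Hn; lia.
Qed.


Lemma wt_nonrec k (hk : (2 <= k)%nat) nu J x : carries k (S nu) J -> mem J x ->
  (forall m, (m <= k - 2)%nat -> ~ mem (third (Isub J m) 2) x) ->
  wt k x = 2 * 2 ^ (nn k - S nu).
Proof.
  intros H Hx Hc. assert (Hle := carries_le _ _ _ H).
  rewrite (wt_val k (nn k - S nu) x). reflexivity. lia.
  - replace (nn k - (nn k - S nu))%nat with (S nu) by lia.
    exists J; split; auto. now apply inI_iff.
  - intros _. replace (nn k - (nn k - S nu) - 1)%nat with nu by lia.
    intros [K [HK Hin]]. apply inI_iff in Hin.
    destruct (carries_cases _ _ _ HK) as [[E _]|[P [m [HP [Hm ->]]]]]; [lia|].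
    assert (HLP := carries_len _ _ _ HP).
    assert (P = J).
    { apply (carries_uniq k (nn k - S nu) (S nu) P J x); auto.
      apply (piece_sub P m 2 x); auto. }
    subst P. apply (Hc m Hm Hin).
Qed.

Lemma wt_zero k J x : carries k 0 J -> mem J x -> wt k x = 2 * 2 ^ (nn k).
Proof.
  intros H Hx. rewrite (wt_val k (nn k) x). reflexivity. lia.
  - rewrite Nat.sub_diag. exists J; split; auto. now apply inI_iff.
  - lia.
Qed.

Lemma pow3_k_ge k : (2 <= k)%nat -> 9 <= 3 ^ k.
Proof. intros; replace 9 with (3 ^ 2) by (simpl; ring). apply Rle_pow; lra || lia. Qed.

Lemma eps_pos k : 0 < eps k.
Proof. unfold eps. apply Rinv_0_lt_compat, pow_lt; lra. Qed.

Lemma eps_le k : (2 <= k)%nat -> eps k <= 1/9.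
Proof.
  intros; unfold eps. pose proof (pow3_k_ge k H).
  unfold Rdiv; rewrite Rmult_1_l. apply Rinv_le_contravar; lra.
Qed.

Lemma six_pe k : 6 * pp k * eps k = 1 + eps k + 8 * eps k ^ 2 / (1 + eps k).
Proof. pose proof (eps_pos k). unfold pp. field. lra. Qed.

Lemma six_pe_ge k : 1 <= 6 * pp k * eps k.
Proof.
  rewrite six_pe. pose proof (eps_pos k).
  assert (0 <= 8 * eps k ^ 2 / (1 + eps k)).
  { apply Rdiv_le_0_compat; [nra|lra]. } lra.
Qed.

Lemma pp_pos k : 0 < pp k.
Proof.
  pose proof (six_pe_ge k). pose proof (eps_pos k).
  destruct (Rlt_or_le 0 (pp k)); auto. nra.
Qed.

Lemma pp_ge k : (2 <= k)%nat -> 3/2 <= pp k.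
Proof.
  intros hk. pose proof (six_pe_ge k). pose proof (eps_pos k). pose proof (eps_le k hk).
  pose proof (pp_pos k). nra.
Qed.

Lemma Q_eq k L : (1 <= k)%nat -> L / 3 ^ (k - 1) = 3 * eps k * L.
Proof.
  intros. unfold eps. replace k with (S (k - 1)) at 2 by lia. simpl.
  field. apply pow_nonzero; lra.
Qed.

Section U.
Variable k : nat.
Hypothesis hk : (2 <= k)%nat.
Definition sp := sqrt (pp k).
Definition sq := sqrt (pp k - 1).

Lemma sp_sq : sp * sp = pp k.
Proof. unfold sp. apply sqrt_sqrt. pose proof (pp_pos k); lra. Qed.
Lemma sq_sq : sq * sq = pp k - 1.
Proof. unfold sq. apply sqrt_sqrt. pose proof (pp_ge k hk); lra. Qed.
Lemma sq_ge : 0 <= sq.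
Proof. apply sqrt_pos. Qed.
Lemma sp_ge1 : 1 <= sp.
Proof. pose proof sp_sq. pose proof (pp_ge k hk). pose proof (sqrt_pos (pp k)). fold sp in H1. nra. Qed.
Lemma uu_eq : uu k = sp + sq.
Proof. reflexivity. Qed.
Lemma uu_inv : / uu k = sp - sq.
Proof.
  rewrite uu_eq. pose proof sp_ge1. pose proof sq_ge.
  apply Rmult_eq_reg_l with (sp + sq); [|lra].
  rewrite Rinv_r by lra. pose proof sp_sq; pose proof sq_sq. nra.
Qed.
Lemma sq_lt_sp : sq < sp.
Proof. pose proof sp_sq; pose proof sq_sq; pose proof sp_ge1; pose proof sq_ge. nra. Qed.
End U.


Definition Tf k x := wt k x ^ 2 * sig k x.

Lemma is_RInt_piece (f : R -> R) (a b c : R) : a <= b -> (forall x, a < x < b -> f x = c) ->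
  is_RInt f a b ((b - a) * c).
Proof.
  intros Hab H. apply (is_RInt_ext (fun _ => c)).
  - intros x Hx. rewrite Rmin_left, Rmax_right in Hx by lra. symmetry; auto.
  - exact (is_RInt_const a b c).
Qed.

Lemma is_RInt_glue (f : R -> R) (a b c l1 l2 v : R) : is_RInt f a b l1 -> is_RInt f b c l2 ->
  l1 + l2 = v -> is_RInt f a c v.
Proof. intros H1 H2 <-. exact (is_RInt_Chasles f a b c l1 l2 H1 H2). Qed.

Lemma ev0 k om s J x : wnu k 0 om s J x =
  om / sqrt (pp k) * (uu k * chi (Iminus J) x + / uu k * chi (Iplus J) x).
Proof. reflexivity. Qed.

Section Zero.
Variable k : nat.
Hypothesis hk : (2 <= k)%nat.
Variable J : intv.
Hypothesis HJ : carries k 0 J.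

Let om := 2 ^ nn k.
Let u := uu k.
Let v := / uu k.

Lemma om_pos : 0 < om.
Proof. apply pow_lt; lra. Qed.

Lemma zero_left x : lo J <= x < (lo J + hi J) / 2 ->
  ww k x = om * u / sp k /\ Tf k x = 4 * om * sp k * v.
Proof.
  intros Hx. assert (HL := carries_len _ _ _ HJ). unfold len in HL.
  assert (Hm : mem J x) by (unfold mem; lra).
  destruct (ww_eval k hk 0 J x HJ Hm) as [s Hs]. rewrite Nat.sub_0_r in Hs.
  rewrite ev0, chi_1, chi_0 in Hs.
  2:{ unfold Iplus; simpl; lra. } 2:{ unfold Iminus; simpl; lra. }
  pose proof (sp_ge1 k hk). pose proof om_pos.
  assert (0 < u) by (unfold u; rewrite uu_eq; pose proof (sq_ge k); lra).
  assert (Hw : ww k x = om * u / sp k) by (rewrite Hs; unfold sp, om, v, u in *; field; lra).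
  split; auto. unfold Tf, sig. rewrite Hw, (wt_zero k J x HJ Hm).
  fold om. unfold v, u in *; field. lra.
Qed.

Lemma zero_right x : (lo J + hi J) / 2 <= x < hi J ->
  ww k x = om * v / sp k /\ Tf k x = 4 * om * sp k * u.
Proof.
  intros Hx. assert (HL := carries_len _ _ _ HJ). unfold len in HL.
  assert (Hm : mem J x) by (unfold mem; lra).
  destruct (ww_eval k hk 0 J x HJ Hm) as [s Hs]. rewrite Nat.sub_0_r in Hs.
  rewrite ev0, chi_0, chi_1 in Hs.
  2:{ unfold Iplus; simpl; lra. } 2:{ unfold Iminus; simpl; lra. }
  pose proof (sp_ge1 k hk). pose proof om_pos.
  assert (0 < u) by (unfold u; rewrite uu_eq; pose proof (sq_ge k); lra).
  assert (Hw : ww k x = om * v / sp k) by (rewrite Hs; unfold sp, om, v, u in *; field; lra).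
  split; auto. unfold Tf, sig. rewrite Hw, (wt_zero k J x HJ Hm).
  fold om. unfold v, u in *; field. lra.
Qed.

Lemma zero_pointwise x : mem J x -> Tf k x <= 30 * pp k ^ 2 * ww k x.
Proof.
  intros Hx. pose proof (sp_ge1 k hk). pose proof om_pos. pose proof (sq_ge k).
  pose proof (sp_sq k) as Hsp. pose proof (sq_sq k hk). pose proof (sq_lt_sp k hk).
  assert (Hu : u = sp k + sq k) by apply uu_eq.
  assert (Hv : v = sp k - sq k) by apply (uu_inv k hk).
  assert (Huv : u * v = 1) by (rewrite Hu, Hv; nra).
  destruct (Rlt_or_le x ((lo J + hi J) / 2)).
  - destruct (zero_left x) as [-> ->]. unfold mem in Hx; lra.
    apply Rmult_le_reg_r with (sp k); [lra|].
    replace (30 * pp k ^ 2 * (om * u / sp k) * sp k) with (30 * pp k ^ 2 * om * u) by (field; lra).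
    replace (4 * om * sp k * v * sp k) with (4 * om * pp k * v) by (rewrite <- Hsp; ring).
    assert (v <= 1) by nra. assert (1 <= u) by nra. assert (0 < v) by nra.
    assert (1 <= pp k) by nra.
    assert (4 * pp k * v <= 30 * pp k ^ 2 * u) by nra. nra.
  - destruct (zero_right x) as [-> ->]. unfold mem in Hx; lra.
    apply Rmult_le_reg_r with (sp k); [lra|].
    replace (30 * pp k ^ 2 * (om * v / sp k) * sp k) with (30 * pp k ^ 2 * om * v) by (field; lra).
    replace (4 * om * sp k * u * sp k) with (4 * om * pp k * u) by (rewrite <- Hsp; ring).
    assert (0 < v) by nra. assert (u <= 2 * sp k) by lra.
    assert (u * u <= 4 * pp k) by nra. assert (1 <= pp k) by nra.
    (* 4 p u <= 30 p^2 v  <=> 4 p u^2 <= 30 p^2 (mult by u) *)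
    assert (4 * pp k * u <= 30 * pp k ^ 2 * v).
    { apply Rmult_le_reg_r with u; [nra|].
      replace (30 * pp k ^ 2 * v * u) with (30 * pp k ^ 2 * (u * v)) by (unfold u, v in *; field; lra). rewrite Huv.
      nra. }
    nra.
Qed.

Lemma zero_int : is_RInt (ww k) (lo J) (hi J) (om * len J) /\
                 is_RInt (Tf k) (lo J) (hi J) (4 * om * pp k * len J).
Proof.
  assert (HL := carries_len _ _ _ HJ). unfold len in *.
  pose proof (sp_ge1 k hk). pose proof om_pos. pose proof (sq_ge k).
  pose proof (sp_sq k) as Hsp. pose proof (sq_sq k hk).
  assert (Hu : u = sp k + sq k) by apply uu_eq.
  assert (Hv : v = sp k - sq k) by apply (uu_inv k hk).
  set (mid := (lo J + hi J) / 2).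
  split.
  - apply (is_RInt_glue _ _ mid _ ((mid - lo J) * (om * u / sp k)) ((hi J - mid) * (om * v / sp k))).
    + apply is_RInt_piece. unfold mid; lra. intros x Hx; apply zero_left; unfold mid in *; lra.
    + apply is_RInt_piece. unfold mid; lra. intros x Hx; apply zero_right; unfold mid in *; lra.
    + unfold mid. rewrite Hu, Hv. field. lra.
  - apply (is_RInt_glue _ _ mid _ ((mid - lo J) * (4 * om * sp k * v)) ((hi J - mid) * (4 * om * sp k * u))).
    + apply is_RInt_piece. unfold mid; lra. intros x Hx; apply zero_left; unfold mid in *; lra.
    + apply is_RInt_piece. unfold mid; lra. intros x Hx; apply zero_right; unfold mid in *; lra.
    + unfold mid. rewrite Hu, Hv. rewrite <- Hsp. field.
Qed.

End Zero.


Definition cc k := 4 * eps k / (1 + eps k).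
Definition tau k := pp k * (1 + eps k) / eps k.

Definition MainP k nu := forall C, carries k nu C ->
  is_RInt (ww k) (lo C) (hi C) (2 ^ (nn k - nu) * len C) /\
  exists v, is_RInt (Tf k) (lo C) (hi C) v /\ v <= tau k * 2 ^ (nn k - nu) * len C.

Lemma cc_pos k : 0 < cc k.
Proof. unfold cc. pose proof (eps_pos k). apply Rdiv_lt_0_compat; lra. Qed.

Ltac clear_all_bodies := repeat match goal with x := _ |- _ => clearbody x end.

Section Succ.
Variable k : nat.
Hypothesis hk : (2 <= k)%nat.
Variable nu : nat.
Variable J : intv.
Hypothesis HJ : carries k (S nu) J.
Hypothesis IH : MainP k nu.

Let om := 2 ^ (nn k - S nu).
Let HL := carries_len _ _ _ HJ.

Lemma om_pos' : 0 < om.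
Proof. apply pow_lt; lra. Qed.

Lemma om_child : 2 ^ (nn k - nu) = 2 * om.
Proof.
  unfold om. pose proof (carries_le _ _ _ HJ).
  replace (nn k - nu)%nat with (S (nn k - S nu)) by lia. reflexivity.
Qed.

Lemma ww_J x : mem J x -> exists s, ww k x = wnu k (S nu) om s J x.
Proof. intros Hx. apply (ww_eval k hk (S nu) J x HJ Hx). Qed.

Lemma Tf_nonrec x V : mem J x -> (forall m, (m <= k - 2)%nat -> ~ mem (third (Isub J m) 2) x) ->
  ww k x = V -> V <> 0 -> Tf k x = 4 * om ^ 2 / V.
Proof.
  intros Hx Hc HV HV0. unfold Tf, sig. rewrite HV, (wt_nonrec k hk nu J x HJ Hx Hc).
  fold om. field. auto.
Qed.

Lemma val_a x m : (m <= k - 2)%nat -> mem (third (Isub J m) 1) x ->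
  ww k x = om / pp k /\ Tf k x = 4 * om * pp k.
Proof.
  intros Hm Hx. assert (HxJ : mem J x) by (apply (piece_sub J m 1 x); auto).
  destruct (ww_J x HxJ) as [s Hs]. rewrite (ev_a k hk nu om s J HL x m Hm Hx) in Hs.
  pose proof om_pos'. pose proof (pp_pos k).
  split; auto. rewrite (Tf_nonrec x (om / pp k)); auto.
  - field; lra.
  - intros m' Hm'. destruct (Nat.eq_dec m' m) as [->|Hne].
    + intros H1. unfold mem in *. rewrite t2_lo in H1. rewrite t1_hi in Hx. lra.
    + apply (pos_other J m m' 2 x); auto. apply (piece12 J m 1 x); auto.
  - apply Rgt_not_eq. apply Rdiv_lt_0_compat; lra.
Qed.

Lemma val_b x : mem (third (Isub J (k-1)) 1) x \/ mem (third (Isub J (k-1)) 2) x ->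
  ww k x = om / pp k /\ Tf k x = 4 * om * pp k.
Proof.
  intros Hx. assert (HxJ : mem J x).
  { destruct Hx as [Hx|Hx]; [apply (piece_sub J (k-1) 1 x) | apply (piece_sub J (k-1) 2 x)]; auto. }
  assert (Hp : Pt J (k-1) <= x).
  { destruct Hx as [Hx|Hx]; [apply (piece12 J (k-1) 1 x) in Hx | apply (piece12 J (k-1) 2 x) in Hx]; auto; lra. }
  destruct (ww_J x HxJ) as [s Hs]. rewrite (ev_b k nu om s J HL x Hx) in Hs.
  pose proof om_pos'. pose proof (pp_pos k).
  split; auto. rewrite (Tf_nonrec x (om / pp k)); auto.
  - field; lra.
  - intros m' Hm'. apply (pos_high J (k-1) m' 2 x); auto; lia.
  - apply Rgt_not_eq. apply Rdiv_lt_0_compat; lra.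
Qed.

Lemma val_cp x : mem (third (Isub J (k-1)) 3) x ->
  ww k x = om / pp k * cc k /\ Tf k x = 4 * om * pp k / cc k.
Proof.
  intros Hx. assert (HxJ : mem J x) by (apply (piece_sub J (k-1) 3 x); auto).
  assert (Hp : Pt J (k-1) <= x).
  { unfold mem in Hx. rewrite t3_lo in Hx. pose proof (Pt_mono J (k-1) (S (k-1)) HL ltac:(lia)). lra. }
  destruct (ww_J x HxJ) as [s Hs]. rewrite (ev_cp k hk nu om s J HL x Hx) in Hs.
  pose proof om_pos'. pose proof (pp_pos k). pose proof (cc_pos k).
  split; auto. rewrite (Tf_nonrec x (om / pp k * cc k)); auto.
  - field; lra.
  - intros m' Hm'. apply (pos_high J (k-1) m' 2 x); auto; lia.
  - apply Rgt_not_eq. apply Rmult_lt_0_compat; auto. apply Rdiv_lt_0_compat; lra.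
Qed.

Definition Qv := len J / 3 ^ (k - 1).
Definition Rv m := len J / 3 ^ m.
Definition Wf m := om / pp k * ((Rv m - Qv) / 2) + 2 * om * ((Rv m - Qv) / 2)
   + om / pp k * (2 * Qv / 3) + om / pp k * cc k * (Qv / 3).
Definition Tb m := 4 * om * pp k * ((Rv m - Qv) / 2) + tau k * (2 * om) * ((Rv m - Qv) / 2)
   + 4 * om * pp k * (2 * Qv / 3) + 4 * om * pp k / cc k * (Qv / 3).

Lemma inner j : (j <= k - 1)%nat ->
  is_RInt (ww k) (Pt J (k - 1 - j)) (hi J) (Wf (k - 1 - j)) /\
  exists v, is_RInt (Tf k) (Pt J (k - 1 - j)) (hi J) v /\ v <= Tb (k - 1 - j).
Proof.
  pose proof om_pos'. pose proof (pp_pos k). pose proof (cc_pos k). pose proof (eps_pos k).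
  assert (HD : Dt J (k - 1) = Qv / 3).
  { unfold Dt, Qv. simpl. field. apply pow_nonzero; lra. }
  assert (HD0 := Dt_pos J (k-1) HL).
  induction j; intros Hj.
  - rewrite Nat.sub_0_r.
    assert (Hb : forall x, Pt J (k-1) < x < Pt J (S (k - 1)) ->
       ww k x = om / pp k /\ Tf k x = 4 * om * pp k).
    { intros x Hx. apply val_b. rewrite Pt_S in Hx. unfold mem.
      rewrite t1_lo, t1_hi, t2_lo, t2_hi, Pt_S.
      destruct (Rlt_or_le x (Pt J (k-1) + Dt J (k-1))); [left|right]; lra. }
    assert (Hc : forall x, Pt J (S (k-1)) < x < hi J ->
       ww k x = om / pp k * cc k /\ Tf k x = 4 * om * pp k / cc k).
    { intros x Hx. apply val_cp. unfold mem. rewrite t3_lo, t3_hi. lra. }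
    assert (Hlt := Pt_lt_hi J (S (k-1)) HL).
    assert (HP := Pt_S J (k-1)).
    assert (Hhi : hi J - Pt J (S (k - 1)) = Qv / 3).
    { rewrite <- HD. unfold Pt, Dt. lra. }
    assert (HR : Rv (k - 1) = Qv) by reflexivity.
    split.
    + eapply (is_RInt_glue _ _ (Pt J (S (k-1)))).
      * apply is_RInt_piece. lra. intros x Hx; apply (Hb x Hx).
      * apply is_RInt_piece. lra. intros x Hx; apply (Hc x Hx).
      * unfold Wf. rewrite Hhi, HP, HR. replace (Qv - Qv) with 0 by ring. rewrite HD. field. lra.
    + eexists; split.
      * eapply (is_RInt_glue _ _ (Pt J (S (k-1)))).
        -- apply is_RInt_piece. lra. intros x Hx; apply (Hb x Hx).
        -- apply is_RInt_piece. lra. intros x Hx; apply (Hc x Hx).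
        -- reflexivity.
      * unfold Tb. rewrite Hhi, HP, HR, HD. right. field. lra.
  - destruct IHj as [IW [vt [IT IT2]]]; [lia|].
    set (m := (k - 1 - S j)%nat).
    assert (Hm : (S m = k - 1 - j)%nat) by (unfold m; lia).
    rewrite <- Hm in IW, IT, IT2.
    assert (Hmk : (m <= k - 2)%nat) by (unfold m; lia).
    assert (HC : carries k nu (third (Isub J m) 2)) by (constructor; auto).
    destruct (IH _ HC) as [CW [vc [CT CT2]]].
    rewrite t2_lo, t2_hi in CW, CT. rewrite len_t2, om_child in CW, CT2.
    assert (HDm := Dt_pos J m HL).
    assert (HPm := Pt_S J m).
    assert (Ha : forall x, Pt J m < x < Pt J m + Dt J m ->
       ww k x = om / pp k /\ Tf k x = 4 * om * pp k).
    { intros x Hx. apply (val_a x m Hmk). unfold mem. rewrite t1_lo, t1_hi. lra. }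
    assert (HRm : Rv m = 3 * Dt J m) by (unfold Rv, Dt; simpl; field; apply pow_nonzero; lra).
    assert (HRS : Rv (S m) = Dt J m) by reflexivity.
    split.
    + eapply (is_RInt_glue _ _ (Pt J (S m))); [eapply (is_RInt_glue _ _ (Pt J m + Dt J m))| |].
      * apply is_RInt_piece. lra. intros x Hx; apply (Ha x Hx).
      * exact CW.
      * reflexivity.
      * exact IW.
      * unfold Wf. rewrite HRm, HRS. clear_all_bodies. field. lra.
    + eexists; split.
      * eapply (is_RInt_glue _ _ (Pt J (S m))); [eapply (is_RInt_glue _ _ (Pt J m + Dt J m))| |].
        -- apply is_RInt_piece. lra. intros x Hx; apply (Ha x Hx).
        -- exact CT.
        -- reflexivity.
        -- exact IT.
        -- reflexivity.
      * assert (E : Tb m = (Pt J m + Dt J m - Pt J m) * (4 * om * pp k)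
                      + 2 * om * tau k * Dt J m + Tb (S m)).
        { unfold Tb. rewrite HRm, HRS. clear_all_bodies. field. lra. }
        rewrite E. 
        assert (vc <= 2 * om * tau k * Dt J m) by (rewrite Rmult_comm in CT2; lra).
        lra.
Qed.

End Succ.


Lemma pp_eq k : pp k = ((1 + eps k) / 2 + 4 * eps k ^ 2 / (1 + eps k)) / (3 * eps k).
Proof. pose proof (eps_pos k). unfold pp. field. lra. Qed.

Lemma tau_ge k : (2 <= k)%nat -> 4 * pp k <= tau k.
Proof.
  intros hk. pose proof (eps_pos k). pose proof (eps_le k hk). pose proof (pp_pos k).
  assert (E : tau k * eps k = pp k * (1 + eps k)) by (unfold tau; field; lra).
  apply Rmult_le_reg_r with (eps k); auto. rewrite E. nra.
Qed.

Lemma Wf0 k nu J : (2 <= k)%nat -> len J > 0 ->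
  Wf k nu J 0 = 2 ^ (nn k - S nu) * len J.
Proof.
  intros hk HL. unfold Wf, Qv, Rv. rewrite Q_eq by lia.
  pose proof (eps_pos k). unfold cc. rewrite pp_eq. simpl. field.
  repeat split; try lra. nra.
Qed.

Lemma Tb0 k nu J : (2 <= k)%nat -> len J > 0 ->
  Tb k nu J 0 = tau k * 2 ^ (nn k - S nu) * len J.
Proof.
  intros hk HL. unfold Tb, Qv, Rv. rewrite Q_eq by lia.
  pose proof (eps_pos k). pose proof (pp_pos k). unfold cc, tau. simpl. field.
  repeat split; lra.
Qed.

Lemma main k (hk : (2 <= k)%nat) nu : MainP k nu.
Proof.
  induction nu; intros C HC; assert (HL := carries_len _ _ _ HC).
  - destruct (zero_int k hk C HC) as [A B]. rewrite Nat.sub_0_r. split; auto.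
    exists (4 * 2 ^ nn k * pp k * len C). split; auto.
    pose proof (tau_ge k hk). assert (0 < 2 ^ nn k) by (apply pow_lt; lra).
    assert (0 < 2 ^ nn k * len C) by (apply Rmult_lt_0_compat; lra).
    nra.
  - destruct (inner k hk nu C HC IHnu (k - 1) (le_n _)) as [A [v [B Bv]]].
    rewrite Nat.sub_diag, Pt_0, Wf0, Tb0 in * by auto.
    split; auto. exists v; split; auto.
Qed.

Lemma final_alg k nu J m : (2 <= k)%nat -> len J > 0 -> (m <= k - 2)%nat ->
  Tb k nu J m <= 30 * pp k ^ 2 * Wf k nu J m.
Proof.
  intros hk HL Hm.
  pose proof (eps_pos k) as He. pose proof (eps_le k hk) as He9.
  pose proof (pp_ge k hk) as Hp. pose proof (six_pe_ge k) as H6.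
  assert (Ho : 0 < 2 ^ (nn k - S nu)) by (apply pow_lt; lra).
  assert (HQ : 0 < Qv k J) by (unfold Qv; apply Rdiv_lt_0_compat; auto; apply pow3_pos).
  assert (HR : 3 * Qv k J <= Rv J m).
  { unfold Qv, Rv. replace (k - 1)%nat with (S (k - 2)) by lia. simpl.
    assert (3 ^ m <= 3 ^ (k - 2)) by (apply Rle_pow; lra || lia).
    pose proof (pow3_pos m).
    replace (3 * (len J / (3 * 3 ^ (k - 2)))) with (len J / 3 ^ (k - 2)) by (field; apply pow_nonzero; lra).
    apply Rmult_le_compat_l; [lra|]. apply Rinv_le_contravar; auto. }
  assert (Htau : tau k = pp k + pp k * / eps k) by (unfold tau; field; lra).
  assert (Hcc : forall o, 4 * o * pp k / cc k = o * pp k * (1 + / eps k)) by (intros; unfold cc; field; lra).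
  assert (Hc0 : 0 < cc k) by apply cc_pos.
  unfold Tb, Wf.
  set (o := 2 ^ (nn k - S nu)) in *. set (Q := Qv k J) in *. set (R := Rv J m) in *.
  set (p := pp k) in *. set (e := eps k) in *.
  set (ie := / e).
  assert (Hie : e * ie = 1) by (unfold ie; field; lra).
  assert (Hiep : 0 < ie) by (unfold ie; apply Rinv_0_lt_compat; lra).
  assert (Hie6 : ie <= 6 * p).
  { assert (ie * 1 <= ie * (6 * p * e)) by (apply Rmult_le_compat_l; lra).
    replace (ie * (6 * p * e)) with (6 * p * (e * ie)) in H by ring. rewrite Hie in H. lra. }
  rewrite Htau, Hcc.
  set (s := R - Q) in *.
  assert (Hs : 2 * Q <= s) by (unfold s; lra).
  assert (W1 : o * s <= o / p * (s / 2) + 2 * o * (s / 2) + o / p * (2 * Q / 3) + o / p * cc k * (Q / 3)).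
  { assert (0 <= o / p * (s / 2)) by (apply Rmult_le_pos; [apply Rdiv_le_0_compat|]; lra).
    assert (0 <= o / p * (2 * Q / 3)) by (apply Rmult_le_pos; [apply Rdiv_le_0_compat|]; lra).
    assert (0 <= o / p * cc k * (Q / 3)).
    { apply Rmult_le_pos; [apply Rmult_le_pos; [apply Rdiv_le_0_compat|]|]; lra. }
    lra. }
  apply Rle_trans with (30 * p ^ 2 * (o * s)).
  2:{ apply Rmult_le_compat_l; auto. nra. }
  assert (A0 : p * ie <= 6 * p * p) by (apply Rmult_le_compat_l with (r := p) in Hie6; lra).
  assert (A1 : p * ie * s <= 6 * p * p * s) by (apply Rmult_le_compat_r; lra).
  assert (A2' : p * ie * Q <= 6 * p * p * Q) by (apply Rmult_le_compat_r; lra).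
  assert (A3 : 6 * p * p * Q <= 3 * p * p * s).
  { assert (0 <= 3 * p * p) by nra. apply Rmult_le_compat_l with (r := 3 * p * p) in Hs; lra. }
  assert (A4 : p * s <= (2/3) * p * p * s).
  { assert (0 <= p * s) by nra. assert (1 <= (2/3) * p) by lra.
    apply Rmult_le_compat_l with (r := p * s) in H0; lra. }
  assert (A5 : 0 < o) by auto.
  fold ie.
  assert (A6 : p * Q <= p * s / 2).
  { apply Rmult_le_compat_l with (r := p) in Hs; lra. }
  assert (B : 2 * p * s + (p + p * ie) * s + 8 * p * Q / 3 + p * (1 + ie) * Q / 3 <= 30 * p ^ 2 * s).
  { replace (p ^ 2) with (p * p) by ring. assert (0 <= p * p * s) by (apply Rmult_le_pos; nra). lra. }
  replace (4 * o * p * (s / 2) + (p + p * ie) * (2 * o) * (s / 2) + 4 * o * p * (2 * Q / 3) + o * p * (1 + ie) * (Q / 3))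
    with (o * (2 * p * s + (p + p * ie) * s + 8 * p * Q / 3 + p * (1 + ie) * Q / 3)) by field.
  replace (30 * p ^ 2 * (o * s)) with (o * (30 * p ^ 2 * s)) by ring.
  apply Rmult_le_compat_l; lra.
Qed.


Lemma pack (f g : R -> R) a b vf vg : is_RInt f a b vf -> is_RInt g a b vg ->
  forall C, vf <= C * vg ->
  exists (pr1 : Riemann_integrable f a b) (pr2 : Riemann_integrable g a b),
    RiemannInt pr1 <= C * RiemannInt pr2.
Proof.
  intros Hf Hg C HC.
  assert (Ef : ex_RInt f a b) by (exists vf; auto).
  assert (Eg : ex_RInt g a b) by (exists vg; auto).
  exists (ex_RInt_Reals_0 _ _ _ Ef), (ex_RInt_Reals_0 _ _ _ Eg).
  rewrite <- !RInt_Reals. rewrite (is_RInt_unique _ _ _ _ Hf), (is_RInt_unique _ _ _ _ Hg).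
  exact HC.
Qed.

Theorem proposition4 (k : nat) (hk : (2 <= k)%nat) (l : nat) (hl : (l <= nn k)%nat)
  (I : intv) (hI : carries k (nn k - l) I) (m : nat) (hm : (m <= k - 2)%nat) :
  exists (pr1 : Riemann_integrable (fun x => wt k x ^ 2 * sig k x)
                                   (lo (Isub I m)) (hi (Isub I m)))
         (pr2 : Riemann_integrable (ww k) (lo (Isub I m)) (hi (Isub I m))),
    RiemannInt pr1 <= 30 * pp k ^ 2 * RiemannInt pr2.
Proof.
  assert (HL := carries_len _ _ _ hI).
  change (lo (Isub I m)) with (Pt I m). change (hi (Isub I m)) with (hi I).
  change (fun x => wt k x ^ 2 * sig k x) with (Tf k).
  assert (Hlo := Pt_ge_lo I m HL). assert (Hhi := Pt_lt_hi I m HL).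
  destruct (nn k - l)%nat as [|nu] eqn:E.
  - destruct (zero_int k hk I hI) as [A B].
    assert (EA : ex_RInt (ww k) (Pt I m) (hi I)).
    { apply (ex_RInt_Chasles_2 (V := R_CompleteNormedModule) _ (lo I)); [lra|]. eexists; eauto. }
    assert (EB : ex_RInt (Tf k) (Pt I m) (hi I)).
    { apply (ex_RInt_Chasles_2 (V := R_CompleteNormedModule) _ (lo I)); [lra|]. eexists; eauto. }
    apply (pack _ _ _ _ _ _ (RInt_correct _ _ _ EB) (RInt_correct _ _ _ EA)).
    apply (is_RInt_le (Tf k) (fun x => 30 * pp k ^ 2 * ww k x) (Pt I m) (hi I)); [lra|exact (RInt_correct _ _ _ EB)| |].
    + apply (is_RInt_scal (ww k) (Pt I m) (hi I) (30 * pp k ^ 2)). exact (RInt_correct _ _ _ EA).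
    + intros x Hx. apply (zero_pointwise k hk I hI x). unfold mem; lra.
  - assert (HJ : carries k (S nu) I) by exact hI.
    destruct (inner k hk nu I HJ (main k hk nu) (k - 1 - m) ltac:(lia)) as [A [v [B Bv]]].
    replace (k - 1 - (k - 1 - m))%nat with m in A, B, Bv by lia.
    apply (pack _ _ _ _ _ _ B A).
    pose proof (final_alg k nu I m hk HL hm). lra.
Qed.
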